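(* Let $m \le n$ and let $A \in \mathbb{R}^{m\times n}$ be a matrix with orthonormal rows. Let $b$ be a positive integer and let $A' \in \mathbb{R}^{m\times n}$ be obtained by rounding each entry of $A$ to $b$ bits, so that every entry of $A - A'$ has absolute value less than $2^{-b}$. Then for every $v \in \mathbb{R}^n$ there exists $s \in \mathbb{R}^n$ such that $A'v = A(v-s)$ and $\|s\|_2 \le n\,2^{-b}\,\|v\|_2$.
   Context: $\|\cdot\|_2$ denotes the Euclidean norm. *)

(* Defs.v *)
From mathcomp Require Import all_boot all_order all_algebra.
Set Implicit Arguments. Unset Strict Implicit. Unset Printing Implicit Defensive.
Import Order.TTheory GRing.Theory Num.Theory.
Local Open Scope ring_scope.

Definition norm2 (R : rcfType) (n : nat) (v : 'cV[R]_n) : R :=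
  Num.sqrt (\sum_(i < n) v i 0 ^+ 2).

(* Main.v *)
Require Import Defs.
From mathcomp Require Import all_boot all_order all_algebra.
From mathcomp Require Import ring lra.
Set Implicit Arguments. Unset Strict Implicit. Unset Printing Implicit Defensive.
Import Order.TTheory GRing.Theory Num.Theory.
Local Open Scope ring_scope.

Section Aux.
Variable R : rcfType.

Definition sq (n : nat) (w : 'cV[R]_n) : R := \sum_(i < n) w i 0 ^+ 2.

Lemma sqE n (w : 'cV[R]_n) : sq w = (w^T *m w) 0 0.
Proof. rewrite /sq !mxE; apply: eq_bigr => i _; by rewrite mxE expr2. Qed.

Lemma sq_ge0 n (w : 'cV[R]_n) : 0 <= sq w.
Proof. apply: sumr_ge0 => i _; exact: sqr_ge0. Qed.

Lemma sq_isom m n (A : 'M[R]_(m, n)) (w : 'cV[R]_m) :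
  A *m A^T = 1%:M -> sq (A^T *m w) = sq w.
Proof.
move=> hA; rewrite !sqE trmx_mul trmxK !mulmxA -(mulmxA _ A) hA mulmx1 //.
Qed.

Lemma sum_sq_bound n (u : 'I_n -> R) :
  (\sum_i u i) ^+ 2 <= n%:R * \sum_i u i ^+ 2.
Proof.
have H : 2 * (\sum_i u i) ^+ 2 <= 2 * (n%:R * \sum_i u i ^+ 2).
  rewrite expr2 mulr_suml mulr_sumr.
  have -> : 2 * (n%:R * \sum_i u i ^+ 2) =
     \sum_(i < n) \sum_(j < n) (u i ^+ 2 + u j ^+ 2).
    symmetry. rewrite (eq_bigr (fun i => n%:R * u i ^+ 2 + \sum_(j < n) u j ^+ 2)); last first.
      by move=> i _; rewrite big_split /= sumr_const card_ord mulr_natl.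
    rewrite big_split /= sumr_const card_ord -mulr_sumr mulr_natl.
    rewrite -mulr2n; ring.
  apply: ler_sum => i _; rewrite mulr_sumr mulr_sumr; apply: ler_sum => j _.
  have := sqr_ge0 (u i - u j); rewrite sqrrB; lra.
by rewrite ler_pM2l in H.
Qed.

End Aux.

Theorem mainTheorem1 (R : rcfType) (m n : nat) (hmn : (m <= n)%N)
  (A : 'M[R]_(m, n)) (hA : A *m A^T = 1%:M)
  (b : nat) (hb : (0 < b)%N)
  (A' : 'M[R]_(m, n)) (hA' : forall i j, `|A i j - A' i j| < 2 ^- b) :
  forall v : 'cV[R]_n, exists s : 'cV[R]_n,
    A' *m v = A *m (v - s) /\ norm2 s <= n%:R * 2 ^- b * norm2 v.
Proof.
move=> v; set E := A - A'; exists (A^T *m (E *m v)); split.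
  rewrite mulmxBr (mulmxA A A^T) hA mul1mx /E mulmxBl opprB addrC subrK //.
set e : R := 2 ^- b.
have e0 : 0 < e by rewrite /e invr_gt0 exprn_gt0.
have row_bd : forall i, (E *m v) i 0 ^+ 2 <= e ^+ 2 * (n%:R * sq v).
  move=> i; rewrite mxE.
  apply: (le_trans (y := (\sum_j e * `|v j 0|) ^+ 2)).
    rewrite -[X in X <= _]real_normK ?num_real // ler_sqr ?nnegrE ?normr_ge0 //; last first.
      by apply: sumr_ge0 => j _; rewrite mulr_ge0 // ltW.
    apply: (le_trans (ler_norm_sum _ _ _)); apply: ler_sum => j _.
    rewrite normrM ler_wpM2r //; apply: ltW; rewrite /E !mxE; exact: hA'.
  rewrite -mulr_sumr exprMn ler_wpM2l ?sqr_ge0 //.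
  apply: (le_trans (sum_sq_bound _)); rewrite /sq.
  rewrite ler_wpM2l ?ler0n //; apply: ler_sum => j _; rewrite real_normK ?num_real //.
have hs : sq (A^T *m (E *m v)) <= (n%:R * e) ^+ 2 * sq v.
  rewrite sq_isom //.
  apply: (le_trans (y := \sum_(i < m) e ^+ 2 * (n%:R * sq v))).
    by apply: ler_sum => i _; apply: row_bd.
  rewrite sumr_const card_ord.
  set x := e ^+ 2 * (n%:R * sq v).
  have hx : 0 <= x by rewrite /x mulr_ge0 ?sqr_ge0 // mulr_ge0 ?ler0n ?sq_ge0.
  rewrite -[x *+ m]mulr_natr.
  have hm : (m%:R : R) <= n%:R by rewrite ler_nat.
  apply: (le_trans (y := x * n%:R)); first by rewrite ler_wpM2l.
  rewrite /x le_eqVlt; apply/orP; left; apply/eqP; ring.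
rewrite /norm2 -!/(sq _).
apply: (le_trans (ler_wsqrtr hs)).
rewrite sqrtrM ?sqr_ge0 // sqrtr_sqr ger0_norm // mulr_ge0 ?ler0n ?ltW //.
Qed.
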